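(* Let $G$ be a finite group and $p$ a fixed prime divisor of $|G|$. Then every self-centralizing non-abelian subgroup of $G$ is a TI-subgroup of $G$ or subnormal in $G$ or has $p'$-order if and only if every non-abelian subgroup of $G$ is a TI-subgroup of $G$ or subnormal in $G$ or has $p'$-order.
   Context: All groups are finite. A subgroup $H$ of a group $G$ is a TI-subgroup of $G$ if for every $g\in G$, $H^g\cap H=1$ or $H^g\cap H=H$. A subgroup $H$ of $G$ is self-centralizing in $G$ if $C_G(H)\leq H$. A subgroup has $p'$-order if its order is not divisible by $p$. *)

(* Defs.v *)
From mathcomp Require Import all_boot all_fingroup all_solvable.
Set Implicit Arguments. Unset Strict Implicit. Unset Printing Implicit Defensive.
Local Open Scope group_scope.

Definition TI_subgroup (gT : finGroupType) (H G : {set gT}) : Prop :=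
  forall g, g \in G -> (H :^ g :&: H = 1) \/ (H :^ g :&: H = H).

Definition self_centralizing (gT : finGroupType) (H G : {set gT}) : bool :=
  'C_G(H) \subset H.

Definition TI_sn_pprime (gT : finGroupType) (p : nat) (H G : {set gT}) : Prop :=
  TI_subgroup H G \/ H <|<| G \/ ~~ (p %| #|H|).

(* Main.v *)
Require Import Defs.
From mathcomp Require Import all_boot all_fingroup all_solvable.
From mathcomp Require Import ssralg finalg zmodp matrix mxalgebra mxrepresentation mxabelem vcharacter.
From mathcomp Require Import zify.
Set Implicit Arguments. Unset Strict Implicit. Unset Printing Implicit Defensive.
Local Open Scope group_scope.

Lemma fpf_abelian_cyclic (gT : finGroupType) (A E : {group gT}) (s : nat) :
  s.-abelem E -> E :!=: 1 -> A \subset 'N(E) -> abelian A ->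
  {in A^#, forall a, 'C_E[a] = 1} -> cyclic A.
Proof.
move=> abelE ntE nEA cAA fpf.
pose gP := fun L : {group gT} => (L :!=: 1) && (A \subset 'N(L)).
have gPE : gP E by rewrite /gP ntE nEA.
have [L minL sLE] := mingroup_exists gPE.
have /andP[ntL nLA] := mingroupp minL.
have abelL : s.-abelem L := abelemS sLE abelE.
have minnL : minnormal L A by [].
have irr := abelem_mx_irrP abelL ntL nLA minnL.
have faith : 'C_A(L) = 1.
  apply/trivgP/subsetP=> a /setIP[Aa cLa]; rewrite inE; apply/negPn/negP => nt.
  have : L \subset 'C_E[a].
    apply/subsetP=> y Ly; rewrite inE (subsetP sLE) //=.
    apply/cent1P; apply/commute_sym; exact: (centP cLa y Ly).
  have := fpf a; rewrite !inE nt Aa => /(_ isT) ->.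
  by rewrite subG1 (negPf ntL).
exact: mx_faithful_irr_abelian_cyclic (abelem_mx_faithful abelL ntL nLA faith) irr cAA.
Qed.

Lemma frob_abelian_cyclic (gT : finGroupType) (G M A : {group gT}) :
  [Frobenius G with complement M] -> A \subset M -> abelian A -> cyclic A.
Proof.
move=> frob sAM cAA.
have [K frobK] := Frobenius_kernel_exists frob.
have [defG ntK ntM _ _] := Frobenius_context frobK.
have [nsKG sMG _ _ _] := sdprod_context defG.
have nKA : A \subset 'N(K) := subset_trans (subset_trans sAM sMG) (normal_norm nsKG).
have coKA : coprime #|K| #|A| := coprime_dvdr (cardSg sAM) (Frobenius_coprime frobK).
set s := pdiv #|K|.
have s_pr : prime s by rewrite pdiv_prime // cardG_gt1.
have [P sylP nPA] := sol_coprime_Sylow_exists s (abelian_sol cAA) nKA coKA.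
have pP : s.-group P := pHall_pgroup sylP.
have ntP : P :!=: 1.
  by rewrite -cardG_gt1 (card_Hall sylP) p_part_gt1 pi_pdiv cardG_gt1.
have pZ : s.-group 'Z(P) := pgroupS (center_sub P) pP.
have ntZ : 'Z(P) :!=: 1 by rewrite center_nil_eq1 ?(pgroup_nil pP).
have abelE := Ohm1_abelem pZ (center_abelian P).
have ntE : 'Ohm_1('Z(P)) :!=: 1 by rewrite Ohm1_eq1.
have chE : 'Ohm_1('Z(P)) \char P := char_trans (Ohm_char 1 _) (center_char P).
have nEA := char_norm_trans chE nPA.
apply: (fpf_abelian_cyclic abelE ntE nEA cAA) => a Aa.
apply/trivgP; rewrite -(Frobenius_reg_ker frobK (_ : a \in M^#)); last first.
  by move: Aa; rewrite !inE => /andP[-> /(subsetP sAM)].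
by apply: setSI; apply: subset_trans (char_sub chE) (pHall_sub sylP).

Qed.

Lemma TI_frob (gT : finGroupType) (G M : {group gT}) :
  M \subset G -> M :!=: G -> M :!=: 1 -> TI_subgroup M G -> 'N_G(M) = M ->
  [Frobenius G with complement M].
Proof.
move=> sMG neMG ntM tiM nMM; apply/andP; split=> //.
apply/normedTI_P; split.
- by rewrite setD_eq0 subG1.
- by rewrite normD1 subsetI sMG normG.
move=> g Gg; case/pred0Pn => y /andP[]; rewrite conjD1g !inE => /andP[nty My] /andP[_ Mgy].
have : M :^ g :&: M != 1.
  by apply/trivgPn; exists y; rewrite ?inE ?Mgy ?My.
case: (tiM g Gg) => [-> | eqM _]; first by rewrite eqxx.
have sMMg : M \subset M :^ g by rewrite -{1}eqM subsetIl.
have eMg : M :^ g = M.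
  by apply/eqP; rewrite eq_sym eqEcard sMMg cardJg leqnn.
by rewrite -nMM inE Gg; apply/normP.
Qed.
Lemma TI_norm (gT : finGroupType) (G L : {group gT}) g :
  TI_subgroup L G -> g \in G -> L :^ g :&: L != 1 -> L :^ g = L.
Proof.
move=> tiL Gg nt; case: (tiL g Gg) => [e|eqM]; first by rewrite e eqxx in nt.
have sMMg : L \subset L :^ g by rewrite -{1}eqM subsetIl.
by apply/eqP; rewrite eq_sym eqEcard sMMg cardJg leqnn.
Qed.

Lemma main_step (gT : finGroupType) (G H : {group gT}) (p : nat) g
  (frob_cyc : forall M : {group gT}, M \subset G -> M :!=: G -> M :!=: 1 ->
      TI_subgroup M G -> 'N_G(M) = M ->
      forall A : {group gT}, A \subset M -> abelian A -> cyclic A) :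
  H \subset G -> ~~ abelian H -> ~~ (H <|<| G) ->
  (forall L : {group gT}, H \proper L -> L \subset G -> TI_subgroup L G \/ L <|<| G) ->
  ~~ ('C_G(H) \subset H) ->
  g \in G -> H :^ g :&: H != 1 -> H :^ g :&: H != H -> False.
Proof.
move=> sHG nabH snH IHL nscH Gg ntD neD.
have snN : forall L : {group gT}, H <| L -> L <|<| G -> False.
  by move=> L nHL snL; rewrite (subnormal_trans (normal_subnormal nHL) snL) in snH.
have [c0 /setIP[Gc0 cHc0] nHc0] : exists2 c0, c0 \in 'C_G(H) & c0 \notin H.
  by case/subsetPn: nscH => c0; exists c0.
have [q nHc] : exists q : nat, c0.`_q \notin H.
  case: (boolP [forall q : 'I_#[c0].+1, c0.`_q \in H]) => [/forallP allH | ].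
    case/negP: nHc0; rewrite -(prod_constt c0) big_mkord.
    by apply: group_prod => i _; apply: allH.
  by rewrite negb_forall => /existsP[q Hq]; exists q.
set c := c0.`_q in nHc.
have c_in : c \in <[c0]> := cycle_constt q c0.
have Gc : c \in G by apply: (subsetP _ _ c_in); rewrite cycle_subG.
have cHc : c \in 'C(H) by apply: (subsetP _ _ c_in); rewrite cycle_subG.
have qc : q.-elt c := p_elt_constt q c0.
set L := H <*> <[c]>.
have nHcc : <[c]> \subset 'N(H) by rewrite cycle_subG (subsetP (cent_sub H)).
have nHL : H <| L.
  by rewrite /normal joing_subl join_subG normG nHcc.
have sLG : L \subset G by rewrite join_subG sHG cycle_subG Gc.
have pHL : H \proper L.
  by rewrite properEneq joing_subl andbT; apply/eqP=> eHL; case/negP: nHc; rewrite eHL mem_gen // inE cycle_id orbT.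
have tiL : TI_subgroup L G by case: (IHL L pHL sLG) => // /(snN L nHL).
have LgL : L :^ g = L.
  apply: TI_norm tiL Gg _; apply: contraNneq ntD => e; apply/eqP/trivgP.
  by rewrite -e; apply: setISS; rewrite ?conjSg (normal_sub nHL).
pose gP := fun K : {group gT} => (K \subset G) && (H <|<| K).
have gPL : gP (H <*> <[c]>)%G by rewrite /gP sLG normal_subnormal.
have [M maxM sLM] := @maxgroup_exists _ gP (H <*> <[c]>)%G gPL.
have [/andP[sMG snHM] maxP] := maxgroupP maxM.
have sHM : H \subset M := subset_trans (normal_sub nHL) sLM.
have neMG : M :!=: G.
  by apply/eqP => eMG; rewrite -eMG snHM in snH.
have nMM : 'N_G(M) = M.
  apply: maxP; last by rewrite subsetI sMG normG.
  rewrite /gP subsetIl (subnormal_trans snHM) //.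
  by apply: normal_subnormal; rewrite normal_subnorm.
have ntM : M :!=: 1.
  apply: contraNneq nabH => M1; apply: abelianS (abelian1 gT).
  by rewrite -M1.
have tiM : TI_subgroup M G.
  case: (IHL M (proper_sub_trans pHL sLM) sMG) => // snM.
  by rewrite (subnormal_trans snHM snM) in snH.
have cycA := frob_cyc M sMG neMG ntM tiM nMM.
have Lc' : c ^ g \in L.
  by rewrite -LgL memJ_conjg mem_gen // inE cycle_id orbT.
have Lc : c \in L by rewrite mem_gen // inE cycle_id orbT.
have cLc : c \in 'C(L) by rewrite centY inE cHc cent_cycle cent1id.
have cLc' : c ^ g \in 'C(L) by rewrite -LgL centJ memJ_conjg.
have ZLc : c \in 'Z(L) by rewrite inE Lc cLc.
have ZLc' : c ^ g \in 'Z(L) by rewrite inE Lc' cLc'.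
have [x0 Hx0 nx0] : exists2 x0, x0 \in H & x0 \notin H :^ g.
  apply/subsetPn; apply: contra neD => sH; by rewrite (setIidPr sH).
set x := x0.`_q.
set y := x0.`_q^'.
have Hx : x \in H by apply: (subsetP _ _ (cycle_constt _ _)); rewrite cycle_subG.
have Hy : y \in H by apply: (subsetP _ _ (cycle_constt _ _)); rewrite cycle_subG.
have defL : L = H * <[c]> by rewrite /L norm_joinEr.
have Ly : y \in H :^ g * <[c ^ g]>.
  by rewrite cycleJ -conjsMg -defL LgL (subsetP (normal_sub nHL)).
have Hgy : y \in H :^ g.
  case/mulsgP: Ly => k ci Hgk ci_in ey.
  have Lk : k \in L by rewrite -LgL (subsetP _ _ Hgk) // conjSg (normal_sub nHL).
  have cLci : ci \in 'C(L) by apply: (subsetP _ _ ci_in); rewrite cycle_subG.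
  have cm : commute k ci by apply/commute_sym; apply: (centP cLci).
  have yn : y ^+ #[c] \in H :^ g.
    rewrite ey expgMn // -(orderJ c g) (expg_cardG ci_in) mulg1.
    exact: groupX.
  have co : coprime #[y] #[c] := p'nat_coprime (p_elt_constt _ _) qc.
  have : generator <[y]> (y ^+ #[c]) by rewrite generator_coprime.
  move/eqP=> eyc; apply: (subsetP _ _ (cycle_id y)); by rewrite eyc cycle_subG.
have nxHg : x \notin H :^ g.
  apply: contra nx0 => Hgx; by rewrite -(consttC q x0) groupM.
have qx : q.-elt x := p_elt_constt q x0.
pose B := (<[x]> <*> 'Z(L))%G.
have LcZ : L \subset 'C('Z(L)) by rewrite centsC subsetIr.
have abB : abelian B.
  rewrite abelianY cycle_abelian center_abelian /= centsC cycle_subG.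
  by apply: (subsetP LcZ); rewrite (subsetP (normal_sub nHL)).
have sBM : B \subset M.
  by rewrite join_subG cycle_subG (subsetP sHM) //= (subset_trans (center_sub L) sLM).
have cycB := cycA B sBM abB.
have Bc : <[c]> \subset B by rewrite cycle_subG mem_gen // inE ZLc orbT.
have Bc' : <[c ^ g]> \subset B by rewrite cycle_subG mem_gen // inE ZLc' orbT.
have Bx : <[x]> \subset B by rewrite cycle_subG mem_gen // inE cycle_id.
have ecc : <[c ^ g]> = <[c]>.
  by apply/eqP; rewrite (eq_subG_cyclic cycB Bc' Bc) -/(order _) orderJ.
have eI : <[c]> :&: H :^ g = <[c]> :&: H.
  apply/eqP; rewrite (eq_subG_cyclic (cycle_cyclic c)) ?subsetIl //.
  have eJ : (<[c]> :&: H) :^ g = <[c]> :&: H :^ g by rewrite conjIg -cycleJ ecc.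
  by rewrite /= -eJ cardJg.
have sxc : <[x]> \subset <[c]>.
  rewrite -(cardSg_cyclic cycB Bx Bc).
  have [a ea] := p_natP qx; have [b eb] := p_natP qc.
  rewrite -/(order x) -/(order c) ea eb.
  case: (leqP a b) => [lab | lba]; first exact: dvdn_exp2l.
  case/negP: nHc; apply: (subsetP _ _ (cycle_id c)).
  apply: subset_trans (_ : <[x]> \subset H); last by rewrite cycle_subG.
  rewrite -(cardSg_cyclic cycB Bc Bx).
  by rewrite -/(order x) -/(order c) ea eb dvdn_exp2l // ltnW.
case/negP: nxHg; have : x \in <[c]> :&: H by rewrite inE (subsetP sxc) ?cycle_id.
by rewrite -eI => /setIP[].
Qed.

Theorem theorem1p7 (gT : finGroupType) (G : {group gT}) (p : nat) :
  prime p -> p %| #|G| ->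
  ((forall H : {group gT}, H \subset G -> ~~ abelian H ->
      self_centralizing H G -> TI_sn_pprime p H G)
   <->
   (forall H : {group gT}, H \subset G -> ~~ abelian H ->
      TI_sn_pprime p H G)).
Proof.
move=> p_pr pG; split; last by move=> h H sHG nab _; apply: h.
move=> hyp.
have frob_cyc : forall M : {group gT}, M \subset G -> M :!=: G -> M :!=: 1 ->
      TI_subgroup M G -> 'N_G(M) = M ->
      forall A : {group gT}, A \subset M -> abelian A -> cyclic A.
  move=> M sMG neMG ntM tiM nMM A sAM cA.
  exact: frob_abelian_cyclic (TI_frob sMG neMG ntM tiM nMM) sAM cA.
suff IH : forall n (H : {group gT}), #|G| - #|H| < n -> H \subset G ->
    ~~ abelian H -> TI_sn_pprime p H G.
  by move=> H; apply: (IH (#|G| - #|H|).+1).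
elim=> [//|n IHn] H ltn sHG nabH.
rewrite /TI_sn_pprime.
case: (boolP (p %| #|H|)) => pH; last by right; right.
case: (boolP (H <|<| G)) => snH; first by right; left.
left => g Gg.
case: (eqVneq (H :^ g :&: H) 1) => [-> | ntD]; first by left.
case: (eqVneq (H :^ g :&: H) H) => [-> | neD]; first by right.
exfalso.
have IHL : forall L : {group gT}, H \proper L -> L \subset G ->
    TI_subgroup L G \/ L <|<| G.
  move=> L pHL sLG.
  have lt : #|G| - #|L| < n.
    have := proper_card pHL; have := subset_leq_card sLG; lia.
  have nabL : ~~ abelian L by apply: contra nabH; apply: abelianS (proper_sub pHL).
  case: (IHn L lt sLG nabL) => [|[]]; [by left | by right |].
  by rewrite (dvdn_trans pH (cardSg (proper_sub pHL))).
case: (boolP ('C_G(H) \subset H)) => sc.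
  case: (hyp H sHG nabH sc) => [tiH | [snH' | npH]].
  - by case: (tiH g Gg) => e; [rewrite e eqxx in ntD | rewrite e eqxx in neD].
  - by rewrite snH' in snH.
  - by rewrite pH in npH.
exact: main_step frob_cyc sHG nabH snH IHL sc Gg ntD neD.
Qed.
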